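(* Let $N=M=1$ (one input, one output). Suppose the production possibility set $T$ generated by the DMUs' data has $\phi>2$ extreme points $(x^1,y^1),\dots,(x^\phi,y^\phi)$, ordered so that $x^1<\dots<x^\phi$ and $y^1<\dots<y^\phi$. Let DMU $\hat\imath$ have data $(x^{\hat\imath},y^{\hat\imath})$. For $\sigma\ge0$ define the virtual point $v(\sigma)=(x^{\hat\imath}-\sigma,\,y^{\hat\imath}+\sigma)$ and the translated lines: $EF_{k,k+1}(\sigma)$, the straight line through $(x^k+\sigma,y^k-\sigma)$ and $(x^{k+1}+\sigma,y^{k+1}-\sigma)$ for $k=1,\dots,\phi-1$; $EF_1(\sigma)$, the vertical line $x=x^1+\sigma$; and $EF_\phi(\sigma)$, the horizontal line $y=y^\phi-\sigma$. For each such family $L$ let the amount of uncertainty required for $L$ be the least $\sigma\ge0$ with $v(\sigma)\in L(\sigma)$ (infinite if none exists). Then the line of the efficient frontier requiring the minimum amount of uncertainty for DMU $\hat\imath$ is determined as follows: if $y^{\hat\imath}+x^{\hat\imath}\le y^1+x^1$ it is $EF_1$; if $y^k+x^k\le y^{\hat\imath}+x^{\hat\imath}\le y^{k+1}+x^{k+1}$ for some $k\in\{1,\dots,\phi-1\}$ it is $EF_{k,k+1}$; if $y^\phi+x^\phi\le y^{\hat\imath}+x^{\hat\imath}$ it is $EF_\phi$.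
   Context: DEA setting: $I$ DMUs with nonnegative input data $X\in\mathbb{R}^{N\times I}$ and output data $Y\in\mathbb{R}^{M\times I}$ (column $i$ gives $(x^i,y^i)$). The (variable returns to scale) production possibility set is $T=\{(x,y): x\ge X\lambda,\ y\le Y\lambda,\ e^T\lambda=1,\ \lambda\ge0\}$. DMU $\hat\imath$ is the (inefficient) DMU under consideration. Under box uncertainty of size $\sigma$, the favourable realisation moves DMU $\hat\imath$ to $(x^{\hat\imath}-\sigma,y^{\hat\imath}+\sigma)$ and every other DMU $i$ to $(x^i+\sigma,y^i-\sigma)$, so the frontier lines are translated by $(\sigma,-\sigma)$. *)

(* Defs.v *)
From mathcomp Require Import all_boot all_order all_algebra.
Set Implicit Arguments. Unset Strict Implicit. Unset Printing Implicit Defensive.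
Import Order.TTheory GRing.Theory Num.Theory.
Local Open Scope ring_scope.

Section DEA.
Variable R : realFieldType.

(* VRS production possibility set with one input and one output:
   data x_i = X i, y_i = Y i for DMUs i : 'I_n. *)
Definition inT (n : nat) (X Y : 'I_n -> R) (p : R * R) : Prop :=
  exists lam : 'I_n -> R,
    (forall i, 0 <= lam i) /\ \sum_(i < n) lam i = 1 /\
    \sum_(i < n) lam i * X i <= p.1 /\ p.2 <= \sum_(i < n) lam i * Y i.

Definition extreme_point (S : R * R -> Prop) (p : R * R) : Prop :=
  S p /\
  forall (a b : R * R) (t : R), S a -> S b -> 0 < t -> t < 1 ->
    p = (t * a.1 + (1 - t) * b.1, t * a.2 + (1 - t) * b.2) -> a = b.

(* Lines of the efficient frontier (extreme points indexed 0 .. phi-1). *)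
Inductive ef_line : Type :=
  | EF_first
  | EF_seg of nat
  | EF_last.

Definition valid_line (phi : nat) (L : ef_line) : bool :=
  match L with EF_seg k => (k.+1 < phi)%N | _ => true end.

Definition on_line (phi : nat) (ex ey : nat -> R) (L : ef_line)
    (sigma : R) (p : R * R) : Prop :=
  match L with
  | EF_first => p.1 = ex 0%N + sigma
  | EF_last => p.2 = ey phi.-1 - sigma
  | EF_seg k =>
      (p.1 - (ex k + sigma)) * ((ey k.+1 - sigma) - (ey k - sigma)) =
      (p.2 - (ey k - sigma)) * ((ex k.+1 + sigma) - (ex k + sigma))
  end.

Definition vpt (xh yh sigma : R) : R * R := (xh - sigma, yh + sigma).

Definition required_unc phi ex ey xh yh (L : ef_line) (s : R) : Prop :=
  0 <= s /\ on_line phi ex ey L s (vpt xh yh s) /\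
  forall s', 0 <= s' -> on_line phi ex ey L s' (vpt xh yh s') -> s <= s'.

(* L requires the minimum amount of uncertainty among all frontier lines:
   its amount is finite and no other line (whose amount may be infinite)
   requires less. *)
Definition min_unc_line phi ex ey xh yh (L : ef_line) : Prop :=
  exists s, required_unc phi ex ey xh yh L s /\
    forall L', valid_line phi L' -> forall s', 0 <= s' ->
      on_line phi ex ey L' s' (vpt xh yh s') -> s <= s'.

End DEA.

(* Main.v *)
Require Import Defs.
From mathcomp Require Import all_boot all_order all_algebra.
From mathcomp Require Import ring lra.
Import Order.TTheory GRing.Theory Num.Theory.
Local Open Scope ring_scope.

Lemma inT_pt (R : realFieldType) n (X Y : 'I_n -> R) i : inT X Y (X i, Y i).
Proof.
exists (fun j => if j == i then 1 else 0); split; [|split; [|split]].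
- by move=> j; case: (j == i).
- by rewrite (bigD1 i) //= eqxx big1 ?addr0 // => j /negbTE ->.
- rewrite (bigD1 i) //= eqxx big1 ?addr0 ?mul1r // => j /negbTE ->; by rewrite mul0r.
- rewrite (bigD1 i) //= eqxx big1 ?addr0 ?mul1r // => j /negbTE ->; by rewrite mul0r.
Qed.

Lemma inT_down (R : realFieldType) n (X Y : 'I_n -> R) p q :
  inT X Y p -> p.1 <= q.1 -> q.2 <= p.2 -> inT X Y q.
Proof.
move=> [l [l0 [l1 [lx ly]]]] h1 h2; exists l; do !split => //.
  exact: le_trans h1.
exact: le_trans ly.
Qed.

Lemma inT_conv (R : realFieldType) n (X Y : 'I_n -> R) (a b : R * R) (t : R) :
  inT X Y a -> inT X Y b -> 0 <= t -> t <= 1 ->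
  inT X Y (t * a.1 + (1 - t) * b.1, t * a.2 + (1 - t) * b.2).
Proof.
move=> [l [l0 [l1 [lx ly]]]] [m [m0 [m1 [mx my]]]] t0 t1.
have t1' : 0 <= 1 - t by rewrite subr_ge0.
exists (fun i => t * l i + (1 - t) * m i); split; [|split; [|split]] => /=.
- by move=> i; apply: addr_ge0; apply: mulr_ge0.
- rewrite big_split /= -!mulr_sumr l1 m1. ring.
- have -> : \sum_(i < n) (t * l i + (1 - t) * m i) * X i =
    t * \sum_(i < n) l i * X i + (1 - t) * \sum_(i < n) m i * X i.
    rewrite !mulr_sumr -big_split /=; apply: eq_bigr => i _; ring.
  by apply: lerD; apply: ler_wpM2l.
- have -> : \sum_(i < n) (t * l i + (1 - t) * m i) * Y i =
    t * \sum_(i < n) l i * Y i + (1 - t) * \sum_(i < n) m i * Y i.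
    rewrite !mulr_sumr -big_split /=; apply: eq_bigr => i _; ring.
  by apply: lerD; apply: ler_wpM2l.
Qed.

Lemma indep (R : realFieldType) (a b c d : R) (u v : R * R) :
  a * d - b * c != 0 ->
  a * u.2 - b * u.1 = a * v.2 - b * v.1 ->
  c * u.2 - d * u.1 = c * v.2 - d * v.1 -> u = v.
Proof.
move=> D e1 e2.
have h2 : (a * d - b * c) * (u.2 - v.2) = 0.
  have -> : (a * d - b * c) * (u.2 - v.2) =
    d * ((a * u.2 - b * u.1) - (a * v.2 - b * v.1))
    - b * ((c * u.2 - d * u.1) - (c * v.2 - d * v.1)) by ring.
  by rewrite e1 e2 !subrr !mulr0 subrr.
have h1 : (a * d - b * c) * (u.1 - v.1) = 0.
  have -> : (a * d - b * c) * (u.1 - v.1) =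
    c * ((a * u.2 - b * u.1) - (a * v.2 - b * v.1))
    - a * ((c * u.2 - d * u.1) - (c * v.2 - d * v.1)) by ring.
  by rewrite e1 e2 !subrr !mulr0 subrr.
move/eqP: h1; rewrite mulf_eq0 (negbTE D) /= subr_eq0 => /eqP h1.
move/eqP: h2; rewrite mulf_eq0 (negbTE D) /= subr_eq0 => /eqP h2.
by move: h1 h2; case: u {e1 e2} => [? ?]; case: v => [? ?] /= -> ->.
Qed.

Lemma comb_eq (R : realFieldType) (x y t m : R) : 0 < t -> t < 1 ->
  x <= m -> y <= m -> t * x + (1 - t) * y = m -> x = m /\ y = m.
Proof. move=> *; split; nra. Qed.

Lemma lex_ext (R : realFieldType) n (X Y : 'I_n -> R) (i0 : 'I_n) (a b c d : R) :
  0 <= a -> 0 <= b -> 0 <= c -> 0 <= d -> a * d - b * c != 0 ->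
  exists q, extreme_point (inT X Y) q /\
    forall p, inT X Y p -> a * p.2 - b * p.1 <= a * q.2 - b * q.1.
Proof.
move=> a0 b0 c0 d0 D.
pose F i := a * Y i - b * X i. pose G i := c * Y i - d * X i.
have [i1 _ Fm] := @arg_maxP _ R _ i0 xpredT F isT.
pose fm := F i1.
have [j /eqP Fj Gm] := @arg_maxP _ R _ i1 (fun i => F i == fm) G (eqxx _).
pose gm := G j.
have lin : forall (l : 'I_n -> R) (e f : R),
    \sum_(i < n) l i * (e * Y i - f * X i) =
    e * \sum_(i < n) l i * Y i - f * \sum_(i < n) l i * X i.
  move=> l e f; rewrite !mulr_sumr -sumrB; apply: eq_bigr => i _; ring.
have B : forall p, inT X Y p ->
    a * p.2 - b * p.1 <= fm /\ (a * p.2 - b * p.1 = fm -> c * p.2 - d * p.1 <= gm).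
  move=> p [l [l0 [l1 [lx ly]]]].
  have le1 : forall e f : R, 0 <= e -> 0 <= f ->
      e * p.2 - f * p.1 <= \sum_(i < n) l i * (e * Y i - f * X i).
    move=> e f e0 f0; rewrite lin //; apply: lerB; exact: ler_wpM2l.
  have le2 : \sum_(i < n) l i * F i <= fm.
    rewrite -[fm]mul1r -l1 mulr_suml; apply: ler_sum => i _.
    by apply: ler_wpM2l => //; apply: Fm.
  split; first exact: le_trans (le1 _ _ a0 b0) le2.
  move=> E.
  have S : \sum_(i < n) l i * F i = fm by apply/eqP; rewrite eq_le le2 -E le1.
  have Z : \sum_(i < n) l i * (fm - F i) = 0.
    rewrite (eq_bigr (fun i => l i * fm - l i * F i)); last by move=> i _; ring.
    by rewrite sumrB -mulr_suml l1 mul1r S subrr.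
  have Zi : forall i, l i * (fm - F i) = 0.
    move=> i; apply: (psumr_eq0P _ Z) => // k _; apply: mulr_ge0 => //.
    by rewrite subr_ge0; apply: Fm.
  apply: le_trans (le1 _ _ c0 d0) _.
  rewrite -[gm]mul1r -l1 mulr_suml; apply: ler_sum => i _.
  have [->|ln0] := eqVneq (l i) 0; first by rewrite !mul0r.
  apply: ler_wpM2l => //; apply: Gm.
  by move/eqP: (Zi i); rewrite mulf_eq0 (negbTE ln0) /= subr_eq0 eq_sym.
exists (X j, Y j); split; last first.
  by move=> p /B [] + _; rewrite /= -/(F j) Fj.
split; first exact: inT_pt.
move=> A Bp t /B [hA1 hA2] /B [hB1 hB2] t0 t1 E.
have EX : X j = t * A.1 + (1 - t) * Bp.1 by case: E.
have EY : Y j = t * A.2 + (1 - t) * Bp.2 by case: E.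
have [fA fB] : a * A.2 - b * A.1 = fm /\ a * Bp.2 - b * Bp.1 = fm.
  apply: comb_eq t0 t1 hA1 hB1 _.
  by rewrite -Fj /F EX EY; ring.
have [gA gB] : c * A.2 - d * A.1 = gm /\ c * Bp.2 - d * Bp.1 = gm.
  apply: comb_eq t0 t1 (hA2 fA) (hB2 fB) _.
  by rewrite /gm /G EX EY; ring.
have qA : A = (X j, Y j) by apply: (@indep _ a b c d) => //; rewrite /= ?fA ?gA -?Fj.
have qB : Bp = (X j, Y j) by apply: (@indep _ a b c d) => //; rewrite /= ?fB ?gB -?Fj.
by rewrite qA qB.
Qed.

Lemma key (R : realFieldType) (Q P : R * R) exk eyk dx dy : 0 < dx + dy ->
  (Q.1 - exk) * dy = (Q.2 - eyk) * dx -> (P.2 - eyk) * dx <= (P.1 - exk) * dy ->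
  Q.1 + Q.2 = P.1 + P.2 -> Q.1 <= P.1.
Proof.
move=> d0 e s h.
have : (Q.1 - P.1) * (dx + dy) <= 0 by nra.
by rewrite pmulr_lle0 // subr_le0.
Qed.

Lemma mono (R : realFieldType) phi (ex ey : nat -> R) :
  (forall k : nat, (k.+1 < phi)%N -> ex k < ex k.+1 /\ ey k < ey k.+1) ->
  forall i j, (i < j)%N -> (j < phi)%N -> ex i < ex j /\ ey i < ey j.
Proof.
move=> Hinc i; elim=> // j IH; rewrite ltnS leq_eqVlt => /orP [/eqP <-|lt] jp.
  exact: Hinc.
have [a b] := IH lt (ltnW jp); have [c d] := Hinc j jp.
by split; [exact: lt_trans a c | exact: lt_trans b d].
Qed.

Lemma monoW (R : realFieldType) phi (ex ey : nat -> R) :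
  (forall k : nat, (k.+1 < phi)%N -> ex k < ex k.+1 /\ ey k < ey k.+1) ->
  forall i j, (i <= j)%N -> (j < phi)%N -> ex i <= ex j /\ ey i <= ey j.
Proof.
move=> Hinc i j; rewrite leq_eqVlt => /orP [/eqP ->|lt] jp; first by split.
by have [a b] := @mono R phi ex ey Hinc _ _ lt jp; split; apply: ltW.
Qed.

Lemma chord (R : realFieldType) n (X Y : 'I_n -> R) (pi pj pl : R * R) :
  inT X Y pi -> inT X Y pl -> extreme_point (inT X Y) pj ->
  pi.1 < pj.1 -> pj.1 < pl.1 ->
  (pj.2 - pi.2) * (pl.1 - pi.1) < (pl.2 - pi.2) * (pj.1 - pi.1) -> False.
Proof.
move=> Ti Tl [_ Ej] h1 h2 h3.
have dd0 : 0 < pl.1 - pi.1 by rewrite subr_gt0; exact: lt_trans h2.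
have ddn : pl.1 - pi.1 != 0 by rewrite gt_eqF.
pose t := (pl.1 - pj.1) / (pl.1 - pi.1).
have t0 : 0 <= t by apply: divr_ge0; [rewrite subr_ge0 ltW | apply: ltW].
have t1 : t <= 1.
  by rewrite /t ler_pdivrMr // mul1r lerD2l lerN2 ltW.
pose C := (t * pi.1 + (1 - t) * pl.1, t * pi.2 + (1 - t) * pl.2).
have TC : inT X Y C by apply: inT_conv.
have C1 : C.1 = pj.1 by rewrite /C /t /=; field.
have C2 : (pl.1 - pi.1) * (C.2 - pj.2) =
   (pl.2 - pi.2) * (pj.1 - pi.1) - (pj.2 - pi.2) * (pl.1 - pi.1).
  by rewrite /C /t /=; field.
have C2' : pj.2 < C.2.
  have : 0 < (pl.1 - pi.1) * (C.2 - pj.2) by rewrite C2 subr_gt0.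
  by rewrite pmulr_rgt0 // subr_gt0.
pose D := (pj.1, pj.2 - (C.2 - pj.2)).
have TD : inT X Y D.
  apply: (@inT_down _ _ X Y C) => //; first by rewrite C1.
  move: C2'; rewrite /D /=; lra.
have h12 : (1 / 2 : R) < 1 by lra.
have h0 : (0 : R) < 1 / 2 by lra.
have E : pj = (1 / 2 * C.1 + (1 - 1 / 2) * D.1, 1 / 2 * C.2 + (1 - 1 / 2) * D.2).
  rewrite [pj]surjective_pairing; congr pair.
    by move: C1; rewrite /D /=; lra.
  by rewrite /D /=; lra.
have CD := Ej C D (1 / 2) TC TD h0 h12 E.
have : C.2 = D.2 by rewrite CD.
move: C2'; rewrite /D /=; lra.
Qed.

Lemma ext_in (R : realFieldType) n (X Y : 'I_n -> R) phi (ex ey : nat -> R) :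
  (forall p : R * R, extreme_point (inT X Y) p <->
     exists2 k : nat, (k < phi)%N & p = (ex k, ey k)) ->
  forall k, (k < phi)%N -> inT X Y (ex k, ey k).
Proof.
move=> He k kp.
have [h _] : extreme_point (inT X Y) (ex k, ey k) by apply/He; exists k.
exact: h.
Qed.

Lemma ext_pt (R : realFieldType) n (X Y : 'I_n -> R) phi (ex ey : nat -> R) :
  (forall p : R * R, extreme_point (inT X Y) p <->
     exists2 k : nat, (k < phi)%N & p = (ex k, ey k)) ->
  forall k, (k < phi)%N -> extreme_point (inT X Y) (ex k, ey k).
Proof. by move=> He k kp; apply/He; exists k. Qed.

Lemma supp_first (R : realFieldType) n (X Y : 'I_n -> R) (i0 : 'I_n) phi (ex ey : nat -> R) :
  (forall k : nat, (k.+1 < phi)%N -> ex k < ex k.+1 /\ ey k < ey k.+1) ->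
  (forall p : R * R, extreme_point (inT X Y) p <->
     exists2 k : nat, (k < phi)%N & p = (ex k, ey k)) ->
  forall p, inT X Y p -> ex 0%N <= p.1.
Proof.
move=> Hinc He p Tp.
have [q [Eq Bq]] := @lex_ext R n X Y i0 0 1 1 0 (lexx _) ler01 ler01 (lexx _)
   ltac:(by rewrite !mulr0 mul1r sub0r oppr_eq0 oner_eq0).
have [m mp qe] := (He q).1 Eq.
have := Bq p Tp; rewrite qe /= !mul0r !mul1r !sub0r lerN2 => h.
have [+ _] := @monoW R phi ex ey Hinc 0 m isT mp.
move=> h2; exact: le_trans h2 h.
Qed.

Lemma supp_last (R : realFieldType) n (X Y : 'I_n -> R) (i0 : 'I_n) phi (ex ey : nat -> R) :
  (forall k : nat, (k.+1 < phi)%N -> ex k < ex k.+1 /\ ey k < ey k.+1) ->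
  (forall p : R * R, extreme_point (inT X Y) p <->
     exists2 k : nat, (k < phi)%N & p = (ex k, ey k)) ->
  forall p, inT X Y p -> p.2 <= ey phi.-1.
Proof.
move=> Hinc He p Tp.
have [q [Eq Bq]] := @lex_ext R n X Y i0 1 0 0 1 ler01 (lexx _) (lexx _) ler01
   ltac:(by rewrite !mulr0 mul1r subr0 oner_eq0).
have [m mp qe] := (He q).1 Eq.
have := Bq p Tp; rewrite qe /= !mul0r !mul1r !subr0 => h.
have [_ ] := @monoW R phi ex ey Hinc m phi.-1 ltac:(by rewrite -ltnS prednK // (leq_trans _ mp)) ltac:(by rewrite prednK // (leq_trans _ mp)).
move=> h2; exact: le_trans h h2.
Qed.

Lemma supp_seg (R : realFieldType) n (X Y : 'I_n -> R) (i0 : 'I_n) phi (ex ey : nat -> R) :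
  (forall k : nat, (k.+1 < phi)%N -> ex k < ex k.+1 /\ ey k < ey k.+1) ->
  (forall p : R * R, extreme_point (inT X Y) p <->
     exists2 k : nat, (k < phi)%N & p = (ex k, ey k)) ->
  forall k, (k.+1 < phi)%N -> forall p, inT X Y p ->
  (p.2 - ey k) * (ex k.+1 - ex k) <= (p.1 - ex k) * (ey k.+1 - ey k).
Proof.
move=> Hinc He k kp p Tp.
have [hx hy] := Hinc k kp.
have dx0 : 0 < ex k.+1 - ex k by rewrite subr_gt0.
have dy0 : 0 < ey k.+1 - ey k by rewrite subr_gt0.
have [q [Eq Bq]] := @lex_ext R n X Y i0 (ex k.+1 - ex k) (ey k.+1 - ey k) 1 0
   (ltW dx0) (ltW dy0) ler01 (lexx _)
   ltac:(by rewrite !mulr0 mulr1 sub0r oppr_eq0 gt_eqF).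
have [m mp qe] := (He q).1 Eq.
have := Bq p Tp; rewrite qe /= => h.
suff h2 : (ex k.+1 - ex k) * ey m - (ey k.+1 - ey k) * ex m <=
          (ex k.+1 - ex k) * ey k - (ey k.+1 - ey k) * ex k by nra.
rewrite leNgt; apply/negP => H.
have kp' : (k < phi)%N by apply: ltnW.
have EI := @ext_in R n X Y phi ex ey He.
have EP := @ext_pt R n X Y phi ex ey He.
case: (ltngtP m k) => [mk|km|mk]; last by rewrite mk in H; lra.
- have [a b] := @mono R phi ex ey Hinc m k mk kp'.
  apply: (@chord R n X Y (ex m, ey m) (ex k, ey k) (ex k.+1, ey k.+1)) => /=.
  + exact: EI.
  + exact: EI.
  + exact: EP.
  + exact: a.
  + exact: hx.
  + nra.
- move: km; rewrite leq_eqVlt => /orP [/eqP mk|mk]; first by rewrite -mk in H; nra.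
  have [a b] := @mono R phi ex ey Hinc k.+1 m mk mp.
  apply: (@chord R n X Y (ex k, ey k) (ex k.+1, ey k.+1) (ex m, ey m)) => /=.
  + exact: EI.
  + exact: EI.
  + exact: EP.
  + exact: hx.
  + exact: a.
  + nra.
Qed.

Lemma final (R : realFieldType) phi (ex ey : nat -> R) (xh yh : R) (W : R * R) L :
  (forall k : nat, (k.+1 < phi)%N -> ex k < ex k.+1 /\ ey k < ey k.+1) ->
  valid_line phi L ->
  ex 0%N <= W.1 -> W.2 <= ey phi.-1 ->
  (forall j, (j.+1 < phi)%N ->
     (W.2 - ey j) * (ex j.+1 - ex j) <= (W.1 - ex j) * (ey j.+1 - ey j)) ->
  on_line phi ex ey L 0 W -> W.1 + W.2 = xh + yh -> W.1 <= xh ->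
  min_unc_line phi ex ey xh yh L.
Proof.
move=> Hinc vL s1 s2 s3 oL hs hx.
have B : forall L', valid_line phi L' -> forall s', 0 <= s' ->
    on_line phi ex ey L' s' (vpt xh yh s') -> (xh - W.1) / 2 <= s'.
  case=> /=.
  - move=> _ s' _ e; lra.
  - move=> j jp s' _ e; have [hx' hy'] := Hinc j jp.
    have := @key R (xh - 2 * s', yh + 2 * s') W (ex j) (ey j)
      (ex j.+1 - ex j) (ey j.+1 - ey j).
    move=> /(_ ltac:(lra)) /(_ ltac:(simpl; lra)) /(_ (s3 j jp)) /(_ ltac:(simpl; lra)).
    simpl; lra.
  - move=> _ s' _ e; lra.
exists ((xh - W.1) / 2); split; last exact: B.
split; first lra.
split; last by move=> z z0 e; apply: (B L vL z z0 e).
move: vL oL; case: L => /=.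
- move=> _ e; lra.
- move=> k _ e.
  set s := (xh - W.1) / 2.
  have -> : xh - s - (ex k + s) = W.1 - ex k by rewrite /s; lra.
  have -> : yh + s - (ey k - s) = W.2 - ey k by rewrite /s; lra.
  have -> : (ey k.+1 - s) - (ey k - s) = ey k.+1 - ey k by ring.
  have -> : (ex k.+1 + s) - (ex k + s) = ex k.+1 - ex k by ring.
  by move: e; rewrite !subr0 !addr0.
- move=> _ e; lra.
Qed.

Theorem theorem5 (R : realFieldType) (n : nat) (X Y : 'I_n -> R) (ihat : 'I_n)
    (phi : nat) (ex ey : nat -> R) :
  (2 < phi)%N ->
  (forall k : nat, (k.+1 < phi)%N -> ex k < ex k.+1 /\ ey k < ey k.+1) ->
  (forall p : R * R, extreme_point (inT X Y) p <->
     exists2 k : nat, (k < phi)%N & p = (ex k, ey k)) ->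
  let xh := X ihat in let yh := Y ihat in
  [/\ yh + xh <= ey 0%N + ex 0%N -> min_unc_line phi ex ey xh yh EF_first,
      forall k : nat, (k.+1 < phi)%N ->
        ey k + ex k <= yh + xh -> yh + xh <= ey k.+1 + ex k.+1 ->
        min_unc_line phi ex ey xh yh (EF_seg k)
    & ey phi.-1 + ex phi.-1 <= yh + xh -> min_unc_line phi ex ey xh yh EF_last].
Proof.
move=> phi2 Hinc He xh yh.
have Th : inT X Y (xh, yh) := @inT_pt R n X Y ihat.
have SF := @supp_first R n X Y ihat phi ex ey Hinc He.
have SL := @supp_last R n X Y ihat phi ex ey Hinc He.
have SS := @supp_seg R n X Y ihat phi ex ey Hinc He.
have EI := @ext_in R n X Y phi ex ey He.
have FF := @final R phi ex ey xh yh.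
have p0 : (0 < phi)%N by apply: leq_trans phi2.
have /= hxh := SF _ Th.
have /= hyh := SL _ Th.
split.
- move=> h.
  pose W := (ex 0%N, yh + xh - ex 0%N).
  have TW : inT X Y W.
    apply: (@inT_down _ _ X Y (ex 0%N, ey 0%N)); first exact: EI.
      by rewrite /W.
    rewrite /W /=; lra.
  apply: (FF W _ Hinc).
  + done.
  + exact: SF TW.
  + exact: SL TW.
  + by move=> j jp; apply: SS.
  + rewrite /W /=; lra.
  + rewrite /W /=; lra.
  + rewrite /W /=; lra.
- move=> k kp h1 h2.
  have [hx hy] := Hinc k kp.
  have dS : 0 < (ey k.+1 + ex k.+1) - (ey k + ex k) by lra.
  pose t := ((yh + xh) - (ey k + ex k)) / ((ey k.+1 + ex k.+1) - (ey k + ex k)).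
  have t0 : 0 <= t by apply: divr_ge0; lra.
  have t1 : t <= 1 by rewrite /t ler_pdivrMr // mul1r; lra.
  pose W := (t * ex k.+1 + (1 - t) * ex k, t * ey k.+1 + (1 - t) * ey k).
  have TW : inT X Y W.
    apply: (@inT_conv _ _ X Y (ex k.+1, ey k.+1) (ex k, ey k) t) => //.
      exact: (EI k.+1 kp).
    exact: (EI k (ltnW kp)).
  have sW : W.1 + W.2 = xh + yh.
    rewrite /W /t /=; field; lra.
  have oW : on_line phi ex ey (EF_seg k) 0 W.
    rewrite /= /W /=; ring.
  apply: (FF W _ Hinc).
  + exact: kp.
  + exact: SF TW.
  + exact: SL TW.
  + by move=> j jp; apply: SS.
  + exact: oW.
  + exact: sW.
  + have K := @key R W (xh, yh) (ex k) (ey k) (ex k.+1 - ex k) (ey k.+1 - ey k).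
    apply: K.
    * lra.
    * by move: oW; rewrite /= !subr0 !addr0.
    * exact: SS.
    * by rewrite sW.
- move=> h.
  have pl : (phi.-1 < phi)%N by rewrite prednK.
  pose W := (yh + xh - ey phi.-1, ey phi.-1).
  have TW : inT X Y W.
    apply: (@inT_down _ _ X Y (ex phi.-1, ey phi.-1)); first exact: EI.
      rewrite /W /=; lra.
    by rewrite /W.
  apply: (FF W _ Hinc).
  + done.
  + exact: SF TW.
  + exact: SL TW.
  + by move=> j jp; apply: SS.
  + rewrite /W /=; lra.
  + rewrite /W /=; lra.
  + rewrite /W /=; lra.
Qed.
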